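(* Let $D=(V,E;s,t)$, $N$ be as in the context and let $\widetilde\Gamma_D=(N,\tilde\gamma)$ be the auxiliary game. Then $\mathcal{C}(\widetilde\Gamma_D)=\{x\in\chi(\widetilde\Gamma_D): x(N\cap P)\ge1 \text{ for all } P\in\mathscr{P}\}$, and this set is non-empty.
   Context: $D=(V,E;s,t)$ is a directed network with unit arc capacities (parallel arcs allowed); $N\subseteq E$ is the set of private arcs (players), $M=E\setminus N$ public arcs; every $s$-$t$ path contains an arc of $N$ and every arc lies on some $s$-$t$ path. A path is a set of arcs joining a sequence of distinct vertices along the same direction; $\mathscr{P}$ is the set of all $s$-$t$ paths. For $S\subseteq N$, $\gamma(S)$ is the maximum number of pairwise arc-disjoint $s$-$t$ paths in $D_S=(V,S\cup M;s,t)$. $\sigma_N$ is the maximum number of $s$-$t$ paths pairwise sharing no arc of $N$. The auxiliary game $\widetilde\Gamma_D=(N,\tilde\gamma)$ has $\tilde\gamma(N)=\sigma_N$ and $\tilde\gamma(S)=\gamma(S)$ for $S\subsetneq N$. $x(S)=\sum_{i\in S}x_i$; $\chi(\widetilde\Gamma_D)=\{x\in\mathbb{R}^N_{\ge0}:x(N)=\sigma_N\}$; $\mathcal{C}(\widetilde\Gamma_D)=\{x\in\chi(\widetilde\Gamma_D):x(S)\ge\tilde\gamma(S)\ \forall S\subseteq N\}$. *)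

(* Defs.v *)
From HB Require Import structures.
From mathcomp Require Import all_boot all_order all_algebra.
From mathcomp Require Import boolp reals.
Set Implicit Arguments. Unset Strict Implicit. Unset Printing Implicit Defensive.
Import Order.TTheory GRing.Theory Num.Theory.

Section Network.
Variables (V E : finType) (tl hd : E -> V) (s t : V).

Fixpoint walk_to_t (v : V) (p : seq E) : bool :=
  if p is e :: p' then (tl e == v) && walk_to_t (hd e) p' else v == t.

Definition stpath_seq (p : seq E) : bool :=
  walk_to_t s p && uniq (s :: map hd p).

Definition is_stpath (P : {set E}) : Prop :=
  exists p : seq E, stpath_seq p /\ P = [set e in p].

Definition disj_packing (A : {set E}) (k : nat) : Prop :=
  exists F : 'I_k -> {set E},
    (forall i, is_stpath (F i) /\ F i \subset A) /\
    (forall i j, i != j -> [disjoint F i & F j]).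

Definition N_packing (N : {set E}) (k : nat) : Prop :=
  exists F : 'I_k -> {set E},
    (forall i, is_stpath (F i)) /\
    (forall i j, i != j -> [disjoint (F i :&: N) & F j]).

(* Maximum k (at most #|E|.+1) satisfying Q; under the standing assumptions
   every packing has size at most #|N| <= #|E|, so this is the true maximum. *)
Definition bmax (Q : nat -> Prop) : nat :=
  \max_(k < #|E|.+2 | `[< Q k >]) k.

(* gamma(S): max number of arc-disjoint s-t paths in D_S = (V, S u M). *)
Definition gamma (N S : {set E}) : nat := bmax (disj_packing (S :|: ~: N)).

Definition sigmaN (N : {set E}) : nat := bmax (N_packing N).

Definition gamma_t (N S : {set E}) : nat :=
  if S == N then sigmaN N else gamma N S.

Definition xsum (R : realType) (x : E -> R) (S : {set E}) : R :=
  (\sum_(i in S) x i)%R.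

(* imputation-type set chi: x in R^N (coordinates outside N are ignored). *)
Definition in_chi (R : realType) (N : {set E}) (x : E -> R) : Prop :=
  (forall i, i \in N -> (0 <= x i)%R) /\ xsum x N = ((sigmaN N)%:R)%R.

Definition in_core (R : realType) (N : {set E}) (x : E -> R) : Prop :=
  in_chi N x /\ forall S : {set E}, S \subset N -> (((gamma_t N S)%:R)%R <= xsum x S)%R.

End Network.

(* Main.v *)
Require Import Defs.
From HB Require Import structures.
From mathcomp Require Import all_boot all_order all_algebra.
From mathcomp Require Import boolp reals.
From mathcomp Require Import zify ring.
Set Implicit Arguments. Unset Strict Implicit. Unset Printing Implicit Defensive.
Import Order.TTheory GRing.Theory Num.Theory.



Section Bmax.
Variable E : finType.
Lemma bmax_spec (Q : nat -> Prop) : Q 0 -> Q (@bmax E Q).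
Proof.
move=> Q0; rewrite /bmax (bigop.bigmax_eq_arg (ord0 : 'I_#|E|.+2)); last by apply/asboolP.
by case: arg_maxnP => [|i /asboolP]; [apply/asboolP|].
Qed.
Lemma bmax_ge (Q : nat -> Prop) k : Q k -> k < #|E|.+2 -> k <= @bmax E Q.
Proof.
move=> Qk lt; rewrite /bmax.
exact: (@leq_bigmax_cond _ (fun i : 'I_#|E|.+2 => `[< Q i >]) (fun i => nat_of_ord i) (Ordinal lt) (asboolT Qk)).
Qed.
End Bmax.



Section Core.
Variables (V E : finType) (tl hd : E -> V) (s t : V) (N : {set E}).
Local Notation stp := (is_stpath tl hd s t).

Lemma sigmaN_ge1 P : stp P -> 1 <= sigmaN tl hd s t N.
Proof.
move=> hP; apply: bmax_ge => //; exists (fun _ => P); split => // i j.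
by rewrite !ord1 eqxx.
Qed.

Lemma gamma_ge1 P (S : {set E}) : stp P -> N :&: P \subset S -> 1 <= gamma tl hd s t N S.
Proof.
move=> hP sub; apply: bmax_ge => //; exists (fun _ => P); split => [i|i j].
  split => //; apply/subsetP => a aP; rewrite !inE.
  case aN: (a \in N); rewrite ?orbT ?orbF //=.
  by rewrite (subsetP sub) // inE aN aP.
by rewrite !ord1 eqxx.
Qed.

Variable R : realType.
Local Open Scope ring_scope.

Lemma xsum_ge0 (x : E -> R) (S : {set E}) : (forall i, i \in N -> 0 <= x i) -> S \subset N -> 0 <= xsum x S.
Proof. by move=> x0 sub; apply: sumr_ge0 => i iS; apply: x0; apply: (subsetP sub). Qed.

Lemma xsum_sub (x : E -> R) (S T : {set E}) : (forall i, i \in N -> 0 <= x i) -> T \subset N -> S \subset T ->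
  xsum x S <= xsum x T.
Proof.
move=> x0 sT sub; rewrite /xsum [X in _ <= X](big_setID S) /=.
have -> : T :&: S = S by apply/setIidPr.
rewrite lerDl.
apply: sumr_ge0 => i; rewrite inE => /andP[_ iT]; apply: x0; exact: (subsetP sT).
Qed.

Lemma core_iff (x : E -> R) :
  in_core tl hd s t N x <->
     (in_chi tl hd s t N x /\
      forall P : {set E}, stp P -> (1 <= xsum x (N :&: P))%R).
Proof.
split.
  move=> [hchi hc]; split => // P hP.
  have := hc (N :&: P) (subsetIl _ _); rewrite /gamma_t.
  case: eqP => [eNP|_] h; apply: le_trans h; rewrite ler1n.
    exact: sigmaN_ge1 hP.
  exact: gamma_ge1 hP (subxx _).
move=> [[x0 xN] hP]; split => // S sSN; rewrite /gamma_t.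
case: eqP => [->|_]; first by rewrite xN.
set k := gamma _ _ _ _ _ _.
have [F [hF hdisj]] : disj_packing tl hd s t (S :|: ~: N) k.
  by apply: bmax_spec; exists (fun _ => set0); split => -[].
pose G i := N :&: F i.
have dG : forall i j, i != j -> [disjoint G i & G j].
  by move=> i j /hdisj dij; apply: disjointW dij; exact: subsetIr.
have sub : \bigcup_i G i \subset S.
  apply/bigcupsP => i _; apply/subsetP => a; rewrite inE => /andP[aN aF].
  by move: (subsetP (hF i).2 a aF); rewrite !inE aN orbF.
apply: le_trans (xsum_sub x0 sSN sub).
rewrite /xsum partition_disjoint_bigcup //.
have -> : (k%:R : R) = \sum_(i < k) (1 : R) by rewrite sumr_const card_ord.
by apply: ler_sum => i _; apply: hP; exact: (hF i).1.
Qed.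
End Core.



Section Flow.
Variables (V E : finType) (tl hd : E -> V) (s t : V) (N : {set E}).
Local Notation stp := (is_stpath tl hd s t).
Local Open Scope ring_scope.

Definition src (x : E * bool) := if x.2 then tl x.1 else hd x.1.
Definition dst (x : E * bool) := if x.2 then hd x.1 else tl x.1.
Fixpoint swalk v (st : seq (E * bool)) w : bool :=
  if st is x :: st' then (src x == v) && swalk (dst x) st' w else v == w.
Definition net (g : E -> int) v : int :=
  \sum_(a | tl a == v) g a - \sum_(a | hd a == v) g a.
Definition contr (x : E * bool) (a : E) : int :=
  if x.1 == a then (if x.2 then 1 else -1) else 0.
Definition hflow st a : int := \sum_(x <- st) contr x a.

Lemma eq_net f g v : f =1 g -> net f v = net g v.
Proof. by move=> e; rewrite /net; congr (_ - _); apply: eq_bigr => a _; rewrite e. Qed.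

Lemma net_add f g v : net (fun a => f a + g a) v = net f v + net g v.
Proof. rewrite /net !big_split /=; ring. Qed.

Lemma net_opp f v : net (fun a => - f a) v = - net f v.
Proof. rewrite /net !sumrN; ring. Qed.

Lemma net0 v : net (fun _ => 0) v = 0.
Proof. by rewrite /net !big1 ?subr0. Qed.

Lemma sum_pick (P : pred E) (a0 : E) (c : int) :
  \sum_(a | P a) (if a0 == a then c else 0) = if P a0 then c else 0.
Proof.
case Pa0: (P a0).
  rewrite (bigD1 a0) //= eqxx big1 ?addr0 // => a /andP[_ ne].
  by rewrite eq_sym (negbTE ne).
by rewrite big1 // => a Pa; case: eqP => // e; rewrite e Pa in Pa0.
Qed.

Lemma net_contr x v : net (contr x) v = (src x == v)%:R - (dst x == v)%:R.
Proof.
case: x => a0 [] /=; rewrite /net /contr /src /dst /= !sum_pick.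
  by case: eqP; case: eqP.
by case: eqP; case: eqP => _ _ /=; lia.
Qed.

Lemma net_hflow v0 st w v : swalk v0 st w ->
  net (hflow st) v = (v0 == v)%:R - (w == v)%:R.
Proof.
elim: st v0 => [|x st IH] v0 /=.
  move=> /eqP ->; rewrite subrr (eq_net _ (g := fun _ => 0)) ?net0 //.
  by move=> a; rewrite /hflow big_nil.
move=> /andP[/eqP <- sw].
rewrite (eq_net _ (g := fun a => contr x a + hflow st a)); last first.
  by move=> a; rewrite /hflow big_cons.
by rewrite net_add net_contr (IH _ sw); ring.
Qed.

Lemma uniq_arcs v st w : swalk v st w -> uniq (v :: map dst st) -> uniq (map fst st).
Proof.
elim: st v => [|y st IH] v //= /andP[/eqP sy sw] /andP[vn /andP[dn un]].
rewrite (IH (dst y)) ?andbT //=; last by rewrite dn.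
apply/mapP => -[z zst ez].
have [e2|ne2] := eqVneq z.2 y.2.
  have zy : z = y by move: ez e2; clear; case: z; case: y => ? ? ? ? /= -> ->.
  by move: dn; rewrite -zy (map_f dst zst).
have : dst z = v.
  rewrite -sy /dst /src -ez; move: ne2; case: (z.2); case: (y.2) => //.
move=> dz; move: vn; rewrite !inE negb_or => /andP[_]; rewrite -dz.
by rewrite (map_f dst zst).
Qed.

Lemma hflow_in st x : uniq (map fst st) -> x \in st ->
  hflow st x.1 = (if x.2 then 1 else -1).
Proof.
elim: st => [|y st IH] //= /andP[yn un]; rewrite inE /hflow big_cons.
case/orP => [/eqP ->|xst].
  rewrite /contr eqxx; rewrite (_ : \sum_(j <- st) _ = 0) ?addr0 //.
  rewrite big_seq big1 // => z zst; rewrite /contr; case: eqP => // e.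
  by move: yn; rewrite -e (map_f fst zst).
rewrite -/(hflow st x.1) IH // /contr; case: eqP => [e|]; last by rewrite add0r.
by move: yn; rewrite e (map_f fst xst).
Qed.

Lemma hflow_out st a : a \notin map fst st -> hflow st a = 0.
Proof.
move=> an; rewrite /hflow big_seq big1 // => x xst; rewrite /contr.
by case: eqP => // e; move: an; rewrite -e (map_f fst xst).
Qed.

Definition valid (g : E -> int) :=
  [/\ forall a, 0 <= g a, forall a, a \in N -> g a <= 1 &
      forall v, v != s -> v != t -> net g v = 0].

Lemma sum_part (f : E -> V) (X : {set V}) (g : E -> int) :
  \sum_(a | f a \in X) g a = \sum_(v in X) \sum_(a | f a == v) g a.
Proof.
rewrite (partition_big f (fun v => v \in X)) //=.
apply: eq_bigr => v vX; apply: eq_bigl => a.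
by case: eqP => [->|]; rewrite ?andbT ?andbF.
Qed.

Lemma cut_val g (X : {set V}) : (forall v, v != s -> v != t -> net g v = 0) ->
  s \in X -> t \notin X ->
  net g s = \sum_(a | (tl a \in X) && (hd a \notin X)) g a
          - \sum_(a | (hd a \in X) && (tl a \notin X)) g a.
Proof.
move=> cons sX tX.
have H1 : \sum_(v in X) net g v = net g s.
  rewrite (bigD1 s) //= big1 ?addr0 // => v /andP[vX vs]; apply: cons => //.
  by apply: contraNneq tX => <-.
have H2 : \sum_(v in X) net g v =
    \sum_(a | tl a \in X) g a - \sum_(a | hd a \in X) g a.
  by rewrite /net sumrB !sum_part.
rewrite -H1 H2 (bigID (fun a => hd a \in X)) /= (bigID (fun a => tl a \in X) (fun a => hd a \in X)) /=.
rewrite (eq_bigl (fun a => (hd a \in X) && (tl a \in X)) _ (fun a => andbC _ _)) /=.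
ring.
Qed.

End Flow.



Section Flow2.
Variables (V E : finType) (tl hd : E -> V) (s t : V) (N : {set E}).
Local Notation stp := (is_stpath tl hd s t).
Local Notation src := (src tl hd).
Local Notation dst := (dst tl hd).
Local Notation swalk := (swalk tl hd).
Local Notation net := (net tl hd).
Local Notation valid := (valid tl hd s t N).
Local Open Scope ring_scope.

Definition srel (ok : pred (E * bool)) : rel V :=
  fun v w => [exists x, ok x && (src x == v) && (dst x == w)].

Lemma steps_of_path ok v p : path (srel ok) v p ->
  exists st, [/\ swalk v st (last v p), all ok st & map dst st = p].
Proof.
elim: p v => [|w p IH] v /=; first by exists [::]; rewrite /= eqxx.
case/andP => /existsP[x /andP[/andP[okx /eqP sx] /eqP dx]] pth.
have [st [sw ast mst]] := IH _ pth.
by exists (x :: st); rewrite /= sx dx eqxx sw okx ast mst.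
Qed.

Lemma conn_walk ok w : connect (srel ok) s w ->
  exists st, [/\ swalk s st w, all ok st & uniq (s :: map dst st)].
Proof.
move=> /connectP[p pth ->]; case/shortenP: pth => p' pth' up' _.
have [st [sw ast mst]] := steps_of_path pth'.
by exists st; rewrite mst.
Qed.

Lemma conn_step ok v w x : connect (srel ok) s v -> ok x -> src x = v -> dst x = w ->
  connect (srel ok) s w.
Proof.
move=> c okx sx dx; apply: connect_trans c (connect1 _).
by apply/existsP; exists x; rewrite okx sx dx !eqxx.
Qed.

Lemma walk_cross (X : {set V}) v p : v \in X -> t \notin X ->
  walk_to_t tl hd t v p -> exists2 a, a \in p & (tl a \in X) && (hd a \notin X).
Proof.
elim: p v => [|a p IH] v /= vX tX; first by move/eqP => e; rewrite -e vX in tX.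
case/andP => /eqP ta w.
case hX: (hd a \in X).
  by have [b bp hb] := IH _ hX tX w; exists b => //; rewrite inE bp orbT.
by exists a; rewrite ?inE ?eqxx // ta vX hX.
Qed.

Lemma hits (X : {set V}) (C : {set E}) P : s \in X -> t \notin X ->
  (forall a, tl a \in X -> hd a \notin X -> a \in C) -> stp P -> P :&: C != set0.
Proof.
move=> sX tX hC [p [/andP[w _] ->]].
have [a ap /andP[h1 h2]] := walk_cross sX tX w.
by apply/set0Pn; exists a; rewrite !inE ap hC.
Qed.

Lemma fwd_walk v st : swalk v st t -> all (fun x => x.2) st ->
  walk_to_t tl hd t v (map fst st).
Proof.
elim: st v => [|x st IH] v //= /andP[/eqP sx sw] /andP[x2 ast].
by rewrite -sx /src /dst x2 eqxx /= IH // -(_ : dst x = hd x.1) // /dst x2.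
Qed.

Lemma fwd_stpath st : swalk s st t -> all (fun x => x.2) st ->
  uniq (s :: map dst st) -> stp [set a in map fst st].
Proof.
move=> sw ast u; exists (map fst st); split => //.
rewrite /stpath_seq fwd_walk //= -map_comp.
have -> : map (hd \o fst) st = map dst st.
  by apply/eq_in_map => x xst; rewrite /dst /= (allP ast x xst).
by [].
Qed.

Definition resok (g : E -> int) (x : E * bool) : bool :=
  if x.2 then (x.1 \notin N) || (g x.1 < 1) else 0 < g x.1.
Definition suppok (g : E -> int) (x : E * bool) : bool := x.2 && (0 < g x.1).

Lemma augment g st : valid g -> swalk s st t -> all (resok g) st ->
  uniq (s :: map dst st) -> s != t ->
  valid (fun a => g a + hflow st a) /\ net (fun a => g a + hflow st a) s = net g s + 1.
Proof.
move=> [g0 g1 gc] sw ast u st_.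
have ua := uniq_arcs sw u.
have key a : (exists2 x, x \in st & x.1 = a) \/ hflow st a = 0.
  case: (boolP (a \in map fst st)) => [/mapP[x xst ->]|an]; first by left; exists x.
  by right; exact: hflow_out.
split; last by rewrite net_add (net_hflow _ sw) eqxx eq_sym (negbTE st_) /=; ring.
split.
- move=> a; case: (key a) => [[x xst <-]|->]; last by rewrite addr0.
  rewrite hflow_in //; have := allP ast x xst; rewrite /resok.
  by have := g0 x.1; case: (x.2) => /=; lia.
- move=> a aN; case: (key a) => [[x xst ea]|->]; last by rewrite addr0 g1.
  rewrite -ea hflow_in //; have := allP ast x xst; rewrite /resok ea aN /=.
  by have := g0 a; have := g1 a aN; case: (x.2) => /=; lia.
- move=> v vs vt; rewrite net_add (net_hflow _ sw) gc //.
  by rewrite eq_sym (negbTE vs) eq_sym (negbTE vt) /=; ring.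
Qed.

Lemma remove g st : valid g -> swalk s st t -> all (suppok g) st ->
  uniq (s :: map dst st) -> s != t ->
  [/\ valid (fun a => g a - hflow st a), net (fun a => g a - hflow st a) s = net g s - 1
    & forall a, 0 <= hflow st a /\ (a \in map fst st -> hflow st a = 1)].
Proof.
move=> [g0 g1 gc] sw ast u st_.
have ua := uniq_arcs sw u.
have key a : (exists2 x, x \in st & x.1 = a) \/ hflow st a = 0.
  case: (boolP (a \in map fst st)) => [/mapP[x xst ->]|an]; first by left; exists x.
  by right; exact: hflow_out.
have hv a : 0 <= hflow st a /\ (a \in map fst st -> hflow st a = 1).
  case: (key a) => [[x xst <-]|h0].
    rewrite hflow_in //; have := allP ast x xst; rewrite /suppok.
    by case/andP => -> _.
  by rewrite h0; split => // /mapP[x xst ex]; move: h0; rewrite ex hflow_in //;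
     have := allP ast x xst; case/andP => ->.
have nt f : net (fun a => g a - f a) s = net g s + net (fun a => - f a) s.
  by rewrite net_add.
split => //; last by rewrite nt net_opp (net_hflow _ sw) eqxx eq_sym (negbTE st_) /=; ring.
split.
- move=> a; case: (key a) => [[x xst <-]|->]; last by rewrite subr0.
  rewrite hflow_in //; have := allP ast x xst; rewrite /suppok.
  by case/andP => -> /=; lia.
- move=> a aN; have [h1 _] := hv a; have := g1 a aN; lia.
- move=> v vs vt; rewrite net_add net_opp (net_hflow _ sw) gc //.
  by rewrite eq_sym (negbTE vs) eq_sym (negbTE vt) /=; ring.
Qed.

End Flow2.



Lemma disjP (T : finType) (A B : {set T}) :
  (forall x, x \in A -> x \in B -> False) -> [disjoint A & B].
Proof.
move=> h; rewrite -setI_eq0; apply/eqP/setP => x; rewrite !inE.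
by apply/negP => /andP[xa xb]; apply: (h x).
Qed.

Section Flow3.
Variables (V E : finType) (tl hd : E -> V) (s t : V) (N : {set E}).
Local Notation stp := (is_stpath tl hd s t).
Local Notation src := (src tl hd).
Local Notation dst := (dst tl hd).
Local Notation swalk := (swalk tl hd).
Local Notation net := (net tl hd).
Local Notation valid := (valid tl hd s t N).
Local Notation srel := (srel tl hd).
Local Open Scope ring_scope.

Definition hitsall (C : {set E}) := forall P, stp P -> P :&: C != set0.

Lemma aug_or_cut g : valid g -> s != t ->
  (exists g', valid g' /\ net g' s = net g s + 1) \/
  (exists C : {set E}, [/\ C \subset N, hitsall C & net g s = #|C|%:R]).
Proof.
move=> vg st_; have [g0 g1 gc] := vg.
pose X := [set v | connect (srel (resok N g)) s v].
have sX : s \in X by rewrite inE connect0.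
case: (boolP (t \in X)) => [tX|tX].
  left; move: tX; rewrite inE => /(conn_walk) [st [sw ast u]].
  by exists (fun a => g a + hflow st a); apply: augment.
right.
have fw a : tl a \in X -> hd a \notin X -> (a \in N) && ~~ (g a < 1).
  move=> ta ha; apply: contraNT ha => h; rewrite inE.
  apply: (conn_step (x := (a, true)) (v := tl a)) => //.
    by move: ta; rewrite inE.
  by rewrite /resok /=; move: h; case: (a \in N) => //=; rewrite negbK.
have bw a : hd a \in X -> tl a \notin X -> g a = 0.
  move=> ha ta; apply/eqP; rewrite eq_le g0 andbT leNgt; apply: contraNN ta => h.
  rewrite inE; apply: (conn_step (x := (a, false)) (v := hd a)) => //.
  by move: ha; rewrite inE.
pose C := [set a | (tl a \in X) && (hd a \notin X)].
exists C; split.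
- apply/subsetP => a; rewrite inE => /andP[h1 h2].
  by case/andP: (fw a h1 h2).
- move=> P; apply: (hits sX tX) => a h1 h2; by rewrite inE h1 h2.
- rewrite (cut_val gc sX tX) [X in _ - X]big1 ?subr0; last first.
    by move=> a /andP[h1 h2]; exact: bw h1 h2.
  rewrite (eq_bigr (fun _ => 1)); last first.
    move=> a /andP[h1 h2]; case/andP: (fw a h1 h2) => aN.
    by have := g1 a aN; lia.
  by rewrite -sumr_const; apply: eq_bigl => a; rewrite /C inE.
Qed.


Hypothesis hN : forall P : {set E}, stp P -> P :&: N != set0.

Lemma s_neq_t : s != t.
Proof.
apply/eqP => e; have h : stp set0.
  by exists [::]; split; [rewrite /stpath_seq /= e eqxx | apply/setP => a; rewrite !inE].
by move: (hN h); rewrite set0I eqxx.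
Qed.

Definition mok (x : E * bool) : bool := x.2 && (x.1 \notin N).

Lemma no_M_path : ~~ connect (srel mok) s t.
Proof.
apply/negP => /conn_walk [st [sw ast u]].
have ast2 : all (fun x => x.2) st by apply/allP => x xst; case/andP: (allP ast x xst).
have := hN (fwd_stpath sw ast2 u); apply/negP; rewrite negbK; apply/eqP/setP => a.
rewrite !inE; case: (boolP (a \in map fst st)) => //= /mapP[x xst ->].
by case/andP: (allP ast x xst) => _ /negbTE.
Qed.

Lemma bound g : valid g -> net g s <= #|E|%:R.
Proof.
move=> [g0 g1 gc].
pose X := [set v | connect (srel mok) s v].
have sX : s \in X by rewrite inE connect0.
have tX : t \notin X by rewrite inE no_M_path.
rewrite (cut_val gc sX tX).
have i0 : 0 <= \sum_(a | (hd a \in X) && (tl a \notin X)) g a by apply: sumr_ge0.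
have o1 : \sum_(a | (tl a \in X) && (hd a \notin X)) g a <= #|E|%:R.
  apply: (@le_trans _ _ (\sum_(a | (tl a \in X) && (hd a \notin X)) (1:int))).
    apply: ler_sum => a /andP[h1 h2]; apply: g1.
    apply: contraNT h2 => aN; rewrite inE.
    apply: (conn_step (x := (a, true)) (v := tl a)) => //.
      by move: h1; rewrite inE.
  rewrite big_mkcond; apply: (@le_trans _ _ (\sum_(a : E) (1:int))).
    by apply: ler_sum => a _; case: ifP.
  by rewrite sumr_const.
lia.
Qed.

Lemma decomp k : forall g, valid g -> net g s = k%:R ->
  exists F : 'I_k -> {set E},
    (forall i, stp (F i) /\ forall a, a \in F i -> a \in N -> 0 < g a) /\
    (forall i j, i != j -> [disjoint F i :&: N & F j]).
Proof.
have st_ := s_neq_t.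
elim: k => [|k IH] g vg vk.
  by exists (fun _ => set0); split => -[].
have [g0 g1 gc] := vg.
pose X := [set v | connect (srel (suppok g)) s v].
have sX : s \in X by rewrite inE connect0.
have tX : t \in X.
  apply/negPn/negP => tX; have := cut_val gc sX tX.
  rewrite big1; last first.
    move=> a /andP[h1 h2]; apply/eqP; rewrite eq_le g0 andbT leNgt.
    apply: contraNN h2 => h; rewrite inE.
    apply: (conn_step (x := (a, true)) (v := tl a)) => //.
      by move: h1; rewrite inE.
  have : 0 <= \sum_(a | (hd a \in X) && (tl a \notin X)) g a by apply: sumr_ge0.
  rewrite vk; lia.
move: tX; rewrite inE => /conn_walk [st [sw ast u]].
have [vg' vk' hv] := remove vg sw ast u st_.
have vk2 : net (fun a => g a - hflow st a) s = k%:R.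
  by rewrite vk' vk -addn1 natrD addrK.
have [F' [hF' dF']] := IH _ vg' vk2.
have ast2 : all (fun x => x.2) st by apply/allP => x xst; case/andP: (allP ast x xst).
pose P := [set a in map fst st].
have sP : stp P := fwd_stpath sw ast2 u.
have P2 a : a \in P -> 0 < g a.
  rewrite inE => /mapP[x xst ->]; by case/andP: (allP ast x xst).
have P1 a : a \in P -> a \in N -> g a - hflow st a = 0.
  move=> aP aN; have [_ h1] := hv a; rewrite h1; last by move: aP; rewrite inE.
  have := P2 a aP; have := g1 a aN; lia.
have P3 a : g a - hflow st a <= g a by have [h _] := hv a; lia.
pose F (i : 'I_k.+1) := if insub (val i) is Some j then F' j else P.
have Fcase (i : 'I_k.+1) : (exists2 j : 'I_k, val j = val i & F i = F' j) \/ (val i = k /\ F i = P).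
  rewrite /F; case: insubP => [j _ ej|nlt]; first by left; exists j.
  by right; split => //; apply/eqP; rewrite eqn_leq -ltnS ltn_ord leqNgt.
exists F; split.
  move=> i; case: (Fcase i) => [[j _ ->]|[_ ->]]; last by split => // a /P2.
  have [h1 h2] := hF' j; split => // a aF aN; have := h2 a aF aN; have := P3 a; lia.
move=> i j nij; case: (Fcase i) => [[i' ei ->]|[ei ->]];
  case: (Fcase j) => [[j' ej ->]|[ej ->]].
- apply: dF'; apply: contraNneq nij => e; apply/eqP/val_inj; by rewrite -ei -ej e.
- apply: disjP => a; rewrite inE => /andP[aF aN] aP.
  have := (hF' i').2 a aF aN; rewrite P1 //; lia.
- apply: disjP => a; rewrite inE => /andP[aP aN] aF.
  have := (hF' j').2 a aF aN; rewrite P1 //; lia.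
- by move: nij; rewrite (_ : i = j) ?eqxx //; apply/val_inj; rewrite /= ei ej.
Qed.

Lemma menger : exists C : {set E},
  [/\ C \subset N, hitsall C & #|C| = sigmaN tl hd s t N].
Proof.
have st_ := s_neq_t.
have H m : (exists g, valid g /\ net g s = m%:R) \/
    (exists (C : {set E}) g, [/\ C \subset N, hitsall C, valid g & net g s = #|C|%:R]).
  elim: m => [|m [[g [vg vm]]|//]]; last by right.
    left; exists (fun _ => 0); split; last exact: net0.
    by split => // v _ _; exact: net0.
  case: (aug_or_cut vg st_) => [[g' [vg' v']]|[C [h1 h2 h3]]].
    by left; exists g'; rewrite v' vm -addn1 natrD.
  by right; exists C, g.
case: (H #|E|.+1) => [[g [vg vm]]|[C [g [h1 h2 vg vC]]]].
  by have := bound vg; rewrite vm ler_nat ltnn.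
exists C; split => //; apply/eqP; rewrite eqn_leq; apply/andP; split.
  have [F [hF dF]] := decomp vg vC.
  apply: bmax_ge; first by exists F; split => // i; exact: (hF i).1.
  by rewrite ltnS ltnW // ltnS max_card.
set k := sigmaN _ _ _ _ _.
have [F [hF dF]] : N_packing tl hd s t N k.
  by apply: bmax_spec; exists (fun _ => set0); split => -[].
have ex i : exists a, a \in F i :&: C by apply/set0Pn; rewrite setIC ?h2 // -setIC h2.
have [f hf] := fin_all_exists ex.
have inj : injective f.
  move=> i j e; apply/eqP; apply/negPn/negP => nij.
  have := dF i j nij; have := hf i; have := hf j; rewrite !inE e.
  move=> /andP[fj _] /andP[_ fC] dis.
  have fN : f j \in F i :&: N.
    rewrite inE; have := hf i; rewrite inE e => /andP[-> _].
    by rewrite (subsetP h1).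
  by rewrite (disjointFr dis fN) in fj.
rewrite -[k]card_ord -cardsT -(card_imset _ inj); apply: subset_leq_card.
by apply/subsetP => _ /imsetP[i _ ->]; case/setIP: (hf i).
Qed.

End Flow3.

Unset Implicit Arguments. Set Strict Implicit.

Theorem lemma5 (R : realType) (V E : finType) (tl hd : E -> V) (s t : V)
  (N : {set E})
  (hN : forall P : {set E}, is_stpath tl hd s t P -> P :&: N != set0)
  (hE : forall e : E, exists P : {set E}, is_stpath tl hd s t P /\ e \in P) :
  (forall x : E -> R,
     in_core tl hd s t N x <->
     (in_chi tl hd s t N x /\
      forall P : {set E}, is_stpath tl hd s t P ->
        (1 <= xsum x (N :&: P))%R)) /\
  (exists x : E -> R, in_core tl hd s t N x).
Proof.
split; first exact: core_iff.
have [C [sCN hC eC]] := menger hN.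
exists (fun a => if a \in C then 1%R else 0%R); apply/core_iff; split.
  split; first by move=> i _; case: ifP.
  rewrite /xsum -big_mkcondr /= -eC.
  rewrite (eq_bigl (fun a => a \in C)) ?sumr_const //.
  by move=> a /=; case aC: (a \in C); rewrite ?andbT ?andbF ?(subsetP sCN).
move=> P hP; have /set0Pn [c] := hC P hP; rewrite inE => /andP[cP cC].
rewrite /xsum (bigD1 c) /=; last by rewrite inE cP (subsetP sCN).
rewrite cC lerDl; apply: sumr_ge0 => i _; by case: ifP.
Qed.
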